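(* Let $G$ be a connected graph of order $n$, let $\delta>0$ be real, let $k=\lceil n/\delta\rceil$, and suppose that $n\ge 12k$. Let $T$ be a shortest $\delta$-tour in $G$. Then there is a set $Z\subseteq P(G)$ of points stopped at by $T$ with $|Z|\le 12k$ such that $d_G(p,Z)\le\delta$ for every point $p\in P(G)$.
   Context: Continuous graph model: for a connected simple graph $G$, each edge $uv$ is viewed as a unit-length interval whose endpoints are the vertices $u,v$. $P(G)$ is the set of all points $p(u,v,\lambda)$ for $uv\in E(G)$, $\lambda\in[0,1]$, where $p(u,v,\lambda)=p(v,u,1-\lambda)$, $p(u,v,0)=u$, $p(u,v,1)=v$. A walk is a finite sequence of points $(p_0,\dots,p_z)$ in which any two consecutive points are distinct and lie on a common edge $uv$, say $p_{i-1}=p(u,v,\lambda)$, $p_i=p(u,v,\mu)$; this step has length $|\lambda-\mu|$ and covers all points of that edge between them. The length of a walk is the sum of the lengths of its steps; $d_G(p,q)$ is the minimum length of a walk from $p$ to $q$, and $d_G(p,Z)=\inf_{q\in Z}d_G(p,q)$. A tour is a walk $T=(p_0,\dots,p_z)$ with $p_0=p_z$; $T$ stops at the points $p_0,\dots,p_z$, and the points of the tour are all points covered by its steps. For $\delta\ge 0$, a $\delta$-tour is a tour $T$ such that every $p\in P(G)$ has distance at most $\delta$ from some point of $T$; a shortest $\delta$-tour is one of minimum length. *)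

(* Defs.v *)
From HB Require Import structures.
From mathcomp Require Import all_boot all_order all_algebra.
From mathcomp Require Import boolp classical_sets reals.
Set Implicit Arguments. Unset Strict Implicit. Unset Printing Implicit Defensive.
Import Order.TTheory GRing.Theory Num.Theory.
Local Open Scope ring_scope.
Local Open Scope classical_set_scope.

Section ContGraph.
Variables (R : realType) (V : finType) (e : rel V).

Definition simple_graph := symmetric e /\ irreflexive e.
Definition connected_graph := forall x y : V, connect e x y.

(* A gpoint p(u,v,lam) is represented by the triple (u, v, lam). *)
Definition gpoint := (V * V * R)%type.

Definition is_point (p : gpoint) : Prop :=
  e p.1.1 p.1.2 /\ 0 <= p.2 <= 1.

Definition vertex_of (p : gpoint) : option V :=
  if p.2 == 0 then Some p.1.1 else if p.2 == 1 then Some p.1.2 else None.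

(* Equality of points of P(G):
   p(u,v,lam) = p(v,u,1-lam), p(u,v,0) = u, p(u,v,1) = v. *)
Definition same_point (p q : gpoint) : Prop :=
  p = q \/ (p.1.1 = q.1.2 /\ p.1.2 = q.1.1 /\ p.2 = 1 - q.2)
  \/ (exists w, vertex_of p = Some w /\ vertex_of q = Some w).

(* A step from p(u,v,lam) to p(u,v,mu), written (u, v, lam, mu). *)
Definition step := (V * V * R * R)%type.
Definition step_start (s : step) : gpoint := (s.1.1.1, s.1.1.2, s.1.2).
Definition step_end (s : step) : gpoint := (s.1.1.1, s.1.1.2, s.2).
Definition step_valid (s : step) : Prop :=
  e s.1.1.1 s.1.1.2 /\ 0 <= s.1.2 <= 1 /\ 0 <= s.2 <= 1 /\ s.1.2 != s.2.
Definition step_length (s : step) : R := `|s.1.2 - s.2|.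
Definition step_covers (s : step) (q : gpoint) : Prop :=
  exists nu : R, Num.min s.1.2 s.2 <= nu <= Num.max s.1.2 s.2 /\
    same_point q (s.1.1.1, s.1.1.2, nu).

Record walk := Walk { wstart : gpoint; wsteps : seq step }.

Fixpoint chain_ok (p : gpoint) (l : seq step) : Prop :=
  match l with
  | [::] => True
  | s :: l' => step_valid s /\ same_point p (step_start s) /\ chain_ok (step_end s) l'
  end.

Definition wend (w : walk) : gpoint := last (wstart w) [seq step_end s | s <- wsteps w].

Definition is_walk (w : walk) : Prop := is_point (wstart w) /\ chain_ok (wstart w) (wsteps w).

Definition walk_length (w : walk) : R := \sum_(s <- wsteps w) step_length s.

Definition walk_from_to (w : walk) (p q : gpoint) : Prop :=
  is_walk w /\ same_point (wstart w) p /\ same_point (wend w) q.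

Definition dist (p q : gpoint) : R :=
  inf [set l | exists w, walk_from_to w p q /\ walk_length w = l].

Definition is_tour (T : walk) : Prop := is_walk T /\ same_point (wend T) (wstart T).

Definition stops (T : walk) : seq gpoint := wstart T :: [seq step_end s | s <- wsteps T].

(* points of the tour: points covered by its steps (together with p_0,
   relevant only for the trivial tour with no steps) *)
Definition tour_point (T : walk) (q : gpoint) : Prop :=
  same_point q (wstart T) \/ exists2 s, s \in wsteps T & step_covers s q.

Definition is_delta_tour (delta : R) (T : walk) : Prop :=
  is_tour T /\ forall p, is_point p -> exists q, tour_point T q /\ dist p q <= delta.

Definition shortest_delta_tour (delta : R) (T : walk) : Prop :=
  is_delta_tour delta T /\
  forall T', is_delta_tour delta T' -> walk_length T <= walk_length T'.

End ContGraph.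

(* Main.v *)
Require Import Defs.
From HB Require Import structures.
From mathcomp Require Import all_boot all_order all_algebra.
From mathcomp Require Import boolp classical_sets reals.
From mathcomp Require Import lra ring zify.
Import Order.TTheory GRing.Theory Num.Theory.
Set Implicit Arguments. Unset Strict Implicit. Unset Printing Implicit Defensive.
Local Open Scope ring_scope.

Section Basics.
Variables (R : realType) (V : finType) (e : rel V).
Local Notation gp := (gpoint R V).
Local Notation sp := (@same_point R V).

Lemma vflip (a b : V) (l : R) :
  vertex_of ((b, a, 1 - l) : gp) = vertex_of ((a, b, l) : gp).
Proof.
rewrite /vertex_of /=.
have [->|l0] := eqVneq l 0.
  by rewrite subr0 oner_eq0 eqxx.
have [->|l1] := eqVneq l 1.
  by rewrite subrr eqxx.
have -> : (1 - l == 0) = false by apply/negbTE; rewrite subr_eq0 eq_sym.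
have -> : (1 - l == 1) = false.
  by apply/negbTE; rewrite -subr_eq0 addrAC subrr add0r oppr_eq0.
by [].
Qed.

Lemma sp_refl (p : gp) : sp p p.
Proof. by left. Qed.

Lemma sp_sym (p q : gp) : sp p q -> sp q p.
Proof.
case=> [->|[[h1 [h2 h3]]|[w [h1 h2]]]]; first by left.
  by right; left; split=> //; split=> //; rewrite h3 opprB addrC subrK.
by right; right; exists w.
Qed.

Lemma sp_trans (p q r : gp) : sp p q -> sp q r -> sp p r.
Proof.
move: p q r => [[a b] l] [[a' b'] l'] [[a'' b''] l''] /=.
case=> [E|[[h1 [h2 h3]]|[w [h1 h2]]]]; first by rewrite E.
- case=> [E|[[g1 [g2 g3]]|[w [g1 g2]]]].
  + by rewrite -E; right; left.
  + by left; simpl in *; subst; congr (_, _, _); rewrite opprB addrC subrK.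
  + right; right; exists w; split=> //.
    by simpl in *; subst; rewrite vflip.
- case=> [E|[[g1 [g2 g3]]|[w' [g1 g2]]]].
  + by rewrite -E; right; right; exists w.
  + right; right; exists w; split=> //.
    by simpl in *; subst; rewrite vflip in h2.
  + by right; right; exists w; split=> //; move: h2 g1 g2 => -> [->].
Qed.

Lemma sp_vertex (p q : gp) w : vertex_of p = Some w -> vertex_of q = Some w -> sp p q.
Proof. by move=> h1 h2; right; right; exists w. Qed.

Lemma sp_flip (a b : V) (l : R) : sp ((a, b, l) : gp) (b, a, 1 - l).
Proof. by right; left; split=> //; split=> //=; rewrite opprB addrC subrK. Qed.

Lemma valid_start (s : step R V) : step_valid e s -> is_point e (step_start s).
Proof. by case=> h1 [h2 [h3 h4]]; split. Qed.

Lemma valid_end (s : step R V) : step_valid e s -> is_point e (step_end s).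
Proof. by case=> h1 [h2 [h3 h4]]; split. Qed.

Lemma chain_last (q : gp) l : is_point e q -> chain_ok e q l ->
  is_point e (last q [seq step_end s | s <- l]).
Proof.
elim: l q => [|s l IH] q //= hq [hs [_ hc]].
by apply: IH hc; apply: valid_end.
Qed.

Lemma wend_point (w : walk R V) : is_walk e w -> is_point e (wend w).
Proof. by case=> h1 h2; apply: chain_last. Qed.

Lemma wft_sp (w : walk R V) x y x' y' : walk_from_to e w x y -> sp x x' -> sp y y' ->
  walk_from_to e w x' y'.
Proof.
case=> hw [h1 h2] hx hy; split=> //; split; first exact: sp_trans h1 hx.
exact: sp_trans h2 hy.
Qed.

Lemma wlen_ge0 (w : walk R V) : 0 <= walk_length w.
Proof. by rewrite /walk_length; apply: sumr_ge0 => s _; exact: normr_ge0. Qed.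

Definition upto (x y : gp) (L : R) :=
  exists w, walk_from_to e w x y /\ walk_length w <= L.

Lemma up_refl x : is_point e x -> upto x x 0.
Proof.
move=> hx; exists (Walk x [::]); split; last by rewrite /walk_length big_nil.
by split; [split|split; left].
Qed.

Lemma up_sp x y y' L : upto x y L -> sp y y' -> upto x y' L.
Proof. by case=> w [hw hl] h; exists w; split=> //; apply: wft_sp hw _ h; left. Qed.

Lemma up_sp_src x x' y L : upto x y L -> sp x x' -> upto x' y L.
Proof. by case=> w [hw hl] h; exists w; split=> //; apply: wft_sp hw h _; left. Qed.

Lemma up_le x y L L' : L <= L' -> upto x y L -> upto x y L'.
Proof. by move=> hL [w [hw hl]]; exists w; split=> //; apply: le_trans hL. Qed.

Lemma chain_rcons (q : gp) l s : chain_ok e q l ->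
  sp (last q [seq step_end s | s <- l]) (step_start s) -> step_valid e s ->
  chain_ok e q (rcons l s).
Proof.
elim: l q => [|s0 l IH] q /=; first by move=> _ h1 h2.
by case=> h1 [h2 h3] h4 h5; split=> //; split=> //; apply: IH.
Qed.

Lemma up_step x y L (s : step R V) : upto x y L -> step_valid e s ->
  sp y (step_start s) -> upto x (step_end s) (L + step_length s).
Proof.
case=> w [[[hw1 hw2] [h1 h2]] hl] hs hy.
exists (Walk (wstart w) (rcons (wsteps w) s)); split.
  split; first split=> //=.
    by apply: chain_rcons hw2 _ hs; apply: sp_trans h2 hy.
  by split=> //; rewrite /wend /= map_rcons last_rcons; left.
by rewrite /walk_length /= -cats1 big_cat big_seq1 /= lerD2r.
Qed.

Lemma up_edge x c d (m1 m2 : R) L : upto x (c, d, m1) L -> e c d ->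
  0 <= m1 <= 1 -> 0 <= m2 <= 1 -> upto x (c, d, m2) (L + `|m1 - m2|).
Proof.
move=> hu he h1 h2; have [<-|hne] := eqVneq m1 m2.
  by apply: up_le hu; rewrite subrr normr0 addr0.
apply: (up_step (s := (c, d, m1, m2)) hu); last by left.
by split=> //; split=> //; split.
Qed.

Lemma up_chain x q l L : upto x q L -> chain_ok e q l ->
  upto x (last q [seq step_end s | s <- l]) (L + \sum_(s <- l) step_length s).
Proof.
elim: l q L => [|s l IH] q L /=; first by rewrite big_nil addr0.
move=> hu [hs [hq hc]].
rewrite big_cons addrA; apply: IH hc.
exact: up_step hu hs hq.
Qed.

Lemma up_walk x y z L (w : walk R V) : upto x y L -> walk_from_to e w y z ->
  upto x z (L + walk_length w).
Proof.
move=> hu [[hw1 hw2] [h1 h2]].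
apply: up_sp h2; apply: up_chain hw2.
by apply: up_sp hu _; apply: sp_sym.
Qed.

Lemma up_rev_chain q l : is_point e q -> chain_ok e q l ->
  upto (last q [seq step_end s | s <- l]) q (\sum_(s <- l) step_length s).
Proof.
elim: l q => [|s l IH] q /= hq; first by move=> _; rewrite big_nil; apply: up_refl.
case=> hs [hq' hc].
have := IH _ (valid_end hs) hc.
move: hs hq' => [he [h1 [h2 h3]]] hq' hu.
rewrite big_cons addrC.
have := up_edge hu he h2 h1.
rewrite /step_length distrC => hu'.
by apply: up_sp hu' _; apply: sp_sym.
Qed.

Lemma up_rev x y L : upto x y L -> upto y x L.
Proof.
case=> w [[[hw1 hw2] [h1 h2]] hl].
have := up_rev_chain hw1 hw2 => hu.
eapply up_le; first exact: hl. apply: up_sp_src h2; exact: up_sp hu h1.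
Qed.

End Basics.
Section Dist.
Variables (R : realType) (V : finType) (e : rel V).
Hypothesis esym : symmetric e.
Hypothesis eirr : irreflexive e.
Hypothesis conn : connected_graph e.
Local Notation gp := (gpoint R V).
Local Notation sp := (@same_point R V).
Local Notation upto := (@upto R V e).

Definition nb (u : V) : V := odflt u [pick v | e u v].
Hypothesis hnb : forall u, e u (nb u).
Definition vpt (u : V) : gp := (u, nb u, 0).

Lemma vpt_point u : is_point e (vpt u).
Proof. by split=> //=; rewrite lexx ler01. Qed.

Lemma sp_vpt0 u v : sp (vpt u) ((u, v, 0) : gp).
Proof. by apply: (@sp_vertex _ _ _ _ u); rewrite /vertex_of /vpt /= eqxx. Qed.

Lemma sp_vpt1 u v : sp (vpt v) ((u, v, 1) : gp).
Proof.
apply: (@sp_vertex _ _ _ _ v); rewrite /vertex_of /vpt /= ?eqxx //.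
by rewrite oner_eq0.
Qed.

Definition Pd (u v : V) (m : nat) : bool :=
  `[< exists s, path e u s /\ last u s = v /\ size s = m >].

Lemma Pd_ex u v : exists m, Pd u v m.
Proof.
have /connectP [s hs hl] := conn u v.
by exists (size s); apply/asboolP; exists s.
Qed.

Definition D (u v : V) : nat := ex_minn (Pd_ex u v).

Lemma Dspec u v : exists s, path e u s /\ last u s = v /\ size s = D u v.
Proof. by rewrite /D; case: ex_minnP => m /asboolP. Qed.

Lemma Dmin u v s : path e u s -> last u s = v -> (D u v <= size s)%N.
Proof.
move=> hp hl; rewrite /D; case: ex_minnP => m _ hm; apply: hm.
by apply/asboolP; exists s.
Qed.

Lemma D0 u : D u u = 0%N.
Proof. by apply/eqP; rewrite -leqn0; apply: (@Dmin u u [::]). Qed.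

Lemma D1 u w v : e w v -> (D u v <= (D u w).+1)%N.
Proof.
move=> hwv; have [s [hp [hl hs]]] := Dspec u w.
rewrite -hs -(size_rcons s v); apply: Dmin; last by rewrite last_rcons.
by rewrite rcons_path hp hl.
Qed.

Lemma Dpath_uniq u v : exists s, [/\ path e u s, last u s = v, uniq (u :: s) & size s = D u v].
Proof.
have [s [hp [hl hs]]] := Dspec u v.
have [s' [hp' hl' hu' hsub]] : exists s', [/\ path e u s', last u s' = last u s,
    uniq (u :: s') & {subset s' <= s}].
  by case: (shortenP hp) => s' hp' hu' hsub; exists s'.
exists s'; split=> //; first by rewrite hl' hl.
apply/eqP; rewrite eqn_leq; apply/andP; split.
  rewrite -hs; apply: uniq_leq_size => //; by case/andP: hu'.
by apply: Dmin => //; rewrite hl' hl.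
Qed.

End Dist.
Section Formula.
Variables (R : realType) (V : finType) (e : rel V).
Hypothesis esym : symmetric e.
Hypothesis eirr : irreflexive e.
Hypothesis conn : connected_graph e.
Hypothesis hnb : forall u, e u (nb e u).
Local Notation gp := (gpoint R V).
Local Notation sp := (@same_point R V).
Local Notation upto := (@upto R V e).
Local Notation vpt := (@vpt R V e).
Local Notation D := (D conn).

Lemma minL (a b a' b' t : R) : a' <= a + t -> b' <= b + t ->
  Num.min a' b' <= Num.min a b + t.
Proof.
move=> h1 h2; rewrite addr_minl le_min; apply/andP; split; rewrite ge_min.
  by rewrite h1.
by rewrite h2 orbT.
Qed.

Definition hD (x : gp) (v : V) : R :=
  Num.min (x.2 + (D x.1.1 v)%:R) ((1 - x.2) + (D x.1.2 v)%:R).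

Definition Fx (x y : gp) : R :=
  let base := Num.min (hD x y.1.1 + y.2) (hD x y.1.2 + (1 - y.2)) in
  if (y.1.1 == x.1.1) && (y.1.2 == x.1.2) then Num.min base `|x.2 - y.2|
  else if (y.1.1 == x.1.2) && (y.1.2 == x.1.1) then Num.min base `|(1 - x.2) - y.2|
  else base.

Lemma hD_adj x c d : e c d -> hD x c <= hD x d + 1.
Proof.
move=> hcd.
have h1 : (D x.1.1 c)%:R <= (D x.1.1 d)%:R + 1 :> R by rewrite natr1 ler_nat D1 // esym.
have h2 : (D x.1.2 c)%:R <= (D x.1.2 d)%:R + 1 :> R by rewrite natr1 ler_nat D1 // esym.
by rewrite /hD; apply: minL; lra.
Qed.

Lemma hD_x1 x : is_point e x -> hD x x.1.1 <= x.2.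
Proof. by move=> _; rewrite /hD ge_min D0 addr0 lexx. Qed.

Lemma hD_x2 x : is_point e x -> hD x x.1.2 <= 1 - x.2.
Proof. by move=> _; rewrite /hD ge_min D0 addr0 lexx orbT. Qed.

Lemma hD_ge0 x v : is_point e x -> 0 <= hD x v.
Proof.
case=> _ /andP [h0 h1]; rewrite /hD le_min; apply/andP; split; apply: addr_ge0 => //.
by rewrite subr_ge0.
Qed.

Lemma F_vertex x y w : is_point e x -> is_point e y -> vertex_of y = Some w ->
  Fx x y = hD x w.
Proof.
move=> hx; move: (hx) => [hx12 /andP [hx0 hx1]].
move: y => [[c d] m] [/= hcd /andP [hm0 hm1]].
rewrite /vertex_of /=.
have [-> [<-]|m0] := eqVneq m 0.
  have hb : Num.min (hD x c + 0) (hD x d + (1 - 0)) = hD x c.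
    by rewrite addr0 subr0 min_l // hD_adj.
  rewrite /Fx /= hb.
  case: ifP => [/andP [/eqP hc /eqP hd]|_].
    by rewrite min_l // subr0 ger0_norm // hc hD_x1.
  case: ifP => [/andP [/eqP hc /eqP hd]|_] //.
  by rewrite min_l // subr0 ger0_norm ?subr_ge0 // hc hD_x2.
have [-> [<-]|//] := eqVneq m 1.
have hb : Num.min (hD x c + 1) (hD x d + (1 - 1)) = hD x d.
  by rewrite subrr addr0 min_r // hD_adj // esym.
rewrite /Fx /= hb.
case: ifP => [/andP [/eqP hc /eqP hd]|_].
  by rewrite min_l // distrC ger0_norm ?subr_ge0 // hd hD_x2.
case: ifP => [/andP [/eqP hc /eqP hd]|_] //.
by rewrite min_l // addrAC subrr add0r normrN ger0_norm // hd hD_x1.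
Qed.

Lemma F_flip x c d m : is_point e x -> Fx x (c, d, m) = Fx x (d, c, 1 - m).
Proof.
move=> [hx12 _].
have e1 : 1 - (1 - m) = m :> R by rewrite opprB addrC subrK.
rewrite /Fx /= e1.
have hb : Num.min (hD x d + (1 - m)) (hD x c + m) =
          Num.min (hD x c + m) (hD x d + (1 - m)) by rewrite minC.
rewrite hb.
have hne : x.1.1 != x.1.2 by apply/negP => /eqP h; move: hx12; rewrite h eirr.
rewrite [(d == x.1.1) && _]andbC [(d == x.1.2) && _]andbC.
have n1 : `|1 - x.2 - (1 - m)| = `|x.2 - m| by rewrite -normrN; congr `|_|; ring.
have n2 : `|x.2 - (1 - m)| = `|1 - x.2 - m| by rewrite -normrN; congr `|_|; ring.
case: (eqVneq c x.1.1) => [hc|hc] /=; case: (eqVneq d x.1.2) => [hd|hd] /=.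
- have -> : (c == x.1.2) = false by rewrite hc (negbTE hne).
  by rewrite /= n1.
- by case: (c == x.1.2) => //=; case: (d == x.1.1) => //=; rewrite n2.
- by case: (c == x.1.2) => //=; case: (d == x.1.1) => //=; rewrite n2.
- by case: (c == x.1.2) => //=; case: (d == x.1.1) => //=; rewrite n2.
Qed.


Lemma F_sp x y y' : is_point e x -> is_point e y -> is_point e y' -> sp y y' ->
  Fx x y = Fx x y'.
Proof.
move: y y' => [[c d] m] [[c' d'] m'] hx hy hy'.
case=> [->|[[h1 [h2 h3]]|[w [h1 h2]]]] //.
  simpl in h1, h2, h3; subst.
  by rewrite (F_flip _ _ _ hx) opprB addrC subrK.
by rewrite (F_vertex hx hy h1) (F_vertex hx hy' h2).
Qed.

Lemma F_step x (s : step R V) : step_valid e s ->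
  Fx x (step_end s) <= Fx x (step_start s) + step_length s.
Proof.
move: s => [[[c d] m1] m2] _; rewrite /Fx /step_end /step_start /step_length /=.
set t := `|m1 - m2|.
have t1 : m1 - m2 <= t by apply: ler_norm.
have t2 : m2 - m1 <= t by rewrite /t distrC; apply: ler_norm.
have hb : Num.min (hD x c + m2) (hD x d + (1 - m2)) <=
          Num.min (hD x c + m1) (hD x d + (1 - m1)) + t by apply: minL; lra.
case: ifP => _; first by apply: minL => //; apply: ler_distD.
by case: ifP => _ //; apply: minL => //; apply: ler_distD.
Qed.

Lemma F_chain x q l : is_point e x -> is_point e q -> chain_ok e q l ->
  Fx x (last q [seq step_end s | s <- l]) <= Fx x q + \sum_(s <- l) step_length s.
Proof.
move=> hx; elim: l q => [|s l IH] q /= hq; first by rewrite big_nil addr0.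
case=> hs [hqs hc].
rewrite big_cons; apply: le_trans (IH _ (valid_end hs) hc) _.
rewrite addrA lerD2r (F_sp hx hq (valid_start hs) hqs).
exact: F_step.
Qed.

Lemma F_self x : Fx x x <= 0.
Proof. by rewrite /Fx !eqxx /= ge_min subrr normr0 lexx orbT. Qed.

Lemma F_lower x y (w : walk R V) : is_point e x -> is_point e y ->
  walk_from_to e w x y -> Fx x y <= walk_length w.
Proof.
move=> hx hy [[hw1 hw2] [h1 h2]].
rewrite -(F_sp hx (wend_point (conj hw1 hw2)) hy h2).
apply: le_trans (F_chain hx hw1 hw2) _.
rewrite (F_sp hx hw1 hx h1) /walk_length.
have := F_self x; lra.
Qed.


Lemma b01 (a : R) : 0 <= a -> a <= 1 -> 0 <= a <= 1.
Proof. by move=> -> ->. Qed.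
Lemma b0 : 0 <= (0 : R) <= 1. Proof. by rewrite lexx ler01. Qed.
Lemma b1 : 0 <= (1 : R) <= 1. Proof. by rewrite lexx ler01. Qed.

Lemma up_x1 x : is_point e x -> upto x (vpt x.1.1) x.2.
Proof.
move: x => [[a b] l] hx; move: (hx) => [/= hab /andP [h0 h1]].
have := up_edge (up_refl hx) hab (m2 := 0) (b01 h0 h1) b0.
rewrite subr0 add0r ger0_norm // => hu.
by apply: up_sp hu _; apply: sp_sym; apply: sp_vpt0.
Qed.

Lemma up_x2 x : is_point e x -> upto x (vpt x.1.2) (1 - x.2).
Proof.
move: x => [[a b] l] hx; move: (hx) => [/= hab /andP [h0 h1]].
have := up_edge (up_refl hx) hab (m2 := 1) (b01 h0 h1) b1.
rewrite add0r distrC ger0_norm ?subr_ge0 // => hu.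
by apply: up_sp hu _; apply: sp_sym; apply: sp_vpt1.
Qed.

Lemma up_adj q u v L : upto q (vpt u) L -> e u v -> upto q (vpt v) (L + 1).
Proof.
move=> hu huv; have hu0 := up_sp hu (@sp_vpt0 R V e u v).
have := up_edge hu0 huv (m2 := 1) b0 b1.
rewrite sub0r normrN normr1 => hu1.
by apply: up_sp hu1 _; apply: sp_sym; apply: sp_vpt1.
Qed.

Lemma up_path q u s L : path e u s -> upto q (vpt u) L ->
  upto q (vpt (last u s)) (L + (size s)%:R).
Proof.
elim: s u L => [|y s IH] u L /=; first by rewrite addr0.
case/andP=> huy hp hu.
have := IH _ _ hp (up_adj hu huy).
by apply: up_le; rewrite -natr1; lra.
Qed.

Lemma up_min x y a b : upto x y a -> upto x y b -> upto x y (Num.min a b).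
Proof. by move=> ha hb; case: (leP a b). Qed.

Lemma up_h x v : is_point e x -> upto x (vpt v) (hD x v).
Proof.
move=> hx; apply: up_min.
  have [s [hp [hl hs]]] := Dspec conn x.1.1 v.
  by have := up_path hp (up_x1 hx); rewrite hl hs.
have [s [hp [hl hs]]] := Dspec conn x.1.2 v.
by have := up_path hp (up_x2 hx); rewrite hl hs.
Qed.

Lemma up_pt0 q y L : is_point e y -> upto q (vpt y.1.1) L -> upto q y (L + y.2).
Proof.
move: y => [[c d] m] [/= hcd /andP [h0 h1]] hu.
have := up_edge (up_sp hu (@sp_vpt0 R V e c d)) hcd (m2 := m) b0
  (b01 h0 h1).
by rewrite sub0r normrN ger0_norm.
Qed.

Lemma up_pt1 q y L : is_point e y -> upto q (vpt y.1.2) L -> upto q y (L + (1 - y.2)).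
Proof.
move: y => [[c d] m] [/= hcd /andP [h0 h1]] hu.
have := up_edge (up_sp hu (@sp_vpt1 R V e c d)) hcd (m2 := m) b1
  (b01 h0 h1).
by rewrite ger0_norm // subr_ge0.
Qed.

Lemma up_F x y : is_point e x -> is_point e y -> upto x y (Fx x y).
Proof.
move=> hx hy.
have hb : upto x y (Num.min (hD x y.1.1 + y.2) (hD x y.1.2 + (1 - y.2))).
  by apply: up_min; [apply: up_pt0 | apply: up_pt1] => //; apply: up_h.
move: x y hx hy hb => [[a b] l] [[c d] m] hx hy hb; rewrite /Fx /=.
move: (hx) (hy) => [/= hab /andP [h0 h1]] [/= hcd /andP [g0 g1]].
case: ifP => [/andP [/eqP hc /eqP hd]|_].
  apply: up_min => //; subst.
  by have := up_edge (up_refl hx) hab (b01 h0 h1) (b01 g0 g1); rewrite add0r.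
case: ifP => [/andP [/eqP hc /eqP hd]|_] //.
apply: up_min => //; subst.
have hf := up_sp (up_refl hx) (sp_flip a b l).
have h01 : 0 <= 1 - l <= 1 by apply/andP; split; lra.
by have := up_edge hf hcd h01 (b01 g0 g1); rewrite add0r.
Qed.

Lemma dist_le x y L : upto x y L -> dist e x y <= L.
Proof.
case=> w [hw hl]; apply: le_trans hl; apply: ge_inf; last by exists w.
by exists 0 => r [w' [_ <-]]; apply: wlen_ge0.
Qed.

Lemma dist_F x y : is_point e x -> is_point e y -> dist e x y = Fx x y.
Proof.
move=> hx hy; apply/eqP; rewrite eq_le; apply/andP; split.
  exact: dist_le (up_F hx hy).
apply: lb_le_inf.
  by case: (up_F hx hy) => w [hw _]; exists (walk_length w); exists w.
by move=> r [w [hw <-]]; apply: F_lower.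
Qed.

Lemma dist_att x y : is_point e x -> is_point e y -> upto x y (dist e x y).
Proof. by move=> hx hy; rewrite dist_F //; apply: up_F. Qed.

Lemma dist_ge0 (x y : gp) : is_point e x -> is_point e y -> 0 <= dist e x y.
Proof.
move=> hx hy; case: (dist_att hx hy) => w [_ hl]; apply: le_trans hl; exact: wlen_ge0.
Qed.

Lemma dist_tri (x y z : gp) : is_point e x -> is_point e y -> is_point e z ->
  dist e x z <= dist e x y + dist e y z.
Proof.
move=> hx hy hz; case: (dist_att hy hz) => w [hw hl].
apply: dist_le; apply: up_le (up_walk (dist_att hx hy) hw).
by rewrite lerD2l.
Qed.

Lemma dist_sym (x y : gp) : is_point e x -> is_point e y -> dist e x y = dist e y x.
Proof.
move=> hx hy; apply/eqP; rewrite eq_le; apply/andP; split; apply: dist_le;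
  apply: up_rev; exact: dist_att.
Qed.

Lemma dist_sp (x y y' : gp) : is_point e x -> is_point e y -> is_point e y' -> sp y y' ->
  dist e x y = dist e x y'.
Proof. by move=> hx hy hy' h; rewrite !dist_F // (F_sp hx hy hy' h). Qed.

End Formula.
Section Paths.
Variables (R : realType) (V : finType) (e : rel V).
Hypothesis esym : symmetric e.
Hypothesis eirr : irreflexive e.
Hypothesis conn : connected_graph e.
Hypothesis hnb : forall u, e u (nb e u).
Local Notation gp := (gpoint R V).
Local Notation sp := (@same_point R V).
Local Notation upto := (@upto R V e).
Local Notation vpt := (@vpt R V e).

Lemma up_prefix q x s L : path e x s -> upto q (vpt x) L ->
  forall i, (i <= size s)%N -> upto q (vpt (nth x (x :: s) i)) (L + i%:R).
Proof.
elim: s x L => [|y s IH] x L /=.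
  by move=> _ hu [|i] //= _; rewrite addr0.
case/andP=> hxy hp hu [|i] /= hi; first by rewrite addr0.
rewrite (set_nth_default y) //.
have := IH _ _ hp (up_adj hu hxy) i hi.
by apply: up_le; rewrite -natr1; lra.
Qed.

Lemma up_suffix x s : path e x s ->
  forall i, (i <= size s)%N -> upto (vpt (nth x (x :: s) i)) (vpt (last x s)) ((size s - i)%:R).
Proof.
elim: s x => [|y s IH] x /=.
  by move=> _ [|i] //= _; apply: up_refl; apply: (@vpt_point R V e hnb).
case/andP=> hxy hp [|i] /= hi.
  have := up_path (s := y :: s) (L := 0) (q := vpt x) (u := x) _ (up_refl (@vpt_point R V e hnb x)).
  by rewrite /= hxy hp add0r subn0 => /(_ isT).
rewrite (set_nth_default y) //.
by rewrite subSS; apply: IH.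
Qed.

End Paths.

Lemma sum_card_disj (V : finType) (I : eqType) (L : seq I) (A : I -> {set V}) :
  uniq L ->
  (forall i j w, i \in L -> j \in L -> i != j -> w \in A i -> w \in A j -> False) ->
  (\sum_(i <- L) #|A i| <= #|V|)%N.
Proof.
move=> hu hd.
suff -> : (\sum_(i <- L) #|A i| = #|[set w | has (fun i => w \in A i) L]|)%N.
  by apply: max_card.
elim: L hu hd => [|i L IH] /=.
  by move=> _ _; rewrite big_nil; apply/esym/eqP; rewrite cards_eq0; apply/eqP/setP => w; rewrite !inE.
case/andP=> hi hu hd; rewrite big_cons IH //; last first.
  by move=> a b w ha hb; apply: hd; rewrite inE ?ha ?hb orbT.
have -> : [set w | has (fun j => w \in A j) (i :: L)] =
          A i :|: [set w | has (fun j => w \in A j) L].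
  by apply/setP => w; rewrite !inE.
rewrite cardsU.
suff -> : A i :&: [set w | has (fun j => w \in A j) L] = finset.set0 by rewrite cards0 subn0.
apply/setP => w; rewrite !inE; apply/negP => /andP [hw /hasP [j hj hwj]].
apply: (hd i j w) => //; first by rewrite inE eqxx.
  by rewrite inE hj orbT.
by apply/negP => /eqP hij; move: hi; rewrite hij hj.
Qed.

Lemma seg_base (R : realType) (a b al be nu : R) : al <= nu -> nu <= be ->
  Num.min (Num.min (a + al) (b + (1 - al))) (Num.min (a + be) (b + (1 - be))) <=
  Num.min (a + nu) (b + (1 - nu)).
Proof.
move=> h1 h2; case: (leP (a + nu) (b + (1 - nu))) => _.
  by rewrite ge_min; apply/orP; left; rewrite ge_min; apply/orP; left; lra.
by rewrite ge_min; apply/orP; right; rewrite ge_min; apply/orP; right; lra.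
Qed.

Lemma seg_dir (R : realType) (a b k al be nu : R) : 0 <= k <= 1 ->
  0 <= al -> al <= nu -> nu <= be -> be <= 1 ->
  Num.min (Num.min (Num.min (a + al) (b + (1 - al))) `|k - al|)
          (Num.min (Num.min (a + be) (b + (1 - be))) `|k - be|) <=
  Num.max (Num.min (Num.min (a + nu) (b + (1 - nu))) `|k - nu|) 1.
Proof.
move=> /andP [k0 k1] h0 h1 h2 h3.
set ba := Num.min (a + al) _; set bb := Num.min (a + be) _; set bn := Num.min (a + nu) _.
have hb : Num.min ba bb <= bn by apply: seg_base.
have m1 : forall x y : R, Num.min x y <= x by move=> x y; rewrite ge_min lexx.
have m2 : forall x y : R, Num.min x y <= y by move=> x y; rewrite ge_min lexx orbT.
set L := Num.min (Num.min ba _) _.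
have La : L <= ba by apply: le_trans (m1 _ _) (m1 _ _).
have Lb : L <= bb by apply: le_trans (m2 _ _) (m1 _ _).
have Lka : L <= `|k - al| by apply: le_trans (m1 _ _) (m2 _ _).
have Lkb : L <= `|k - be| by apply: le_trans (m2 _ _) (m2 _ _).
rewrite le_max; case: (leP bn `|k - nu|) => hn.
  by apply/orP; left; apply: le_trans hb; rewrite le_min La Lb.
case: (leP k al) => hk.
  apply/orP; left; apply: le_trans Lka _.
  by rewrite distrC ger0_norm ?subr_ge0 // [X in _ <= X]distrC ger0_norm ?subr_ge0; lra.
case: (leP be k) => hk'.
  apply/orP; left; apply: le_trans Lkb _.
  by rewrite ger0_norm ?subr_ge0 // ger0_norm ?subr_ge0; lra.
apply/orP; right; apply: le_trans Lka _.
by rewrite ger0_norm ?subr_ge0; lra.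
Qed.

Section Stops.
Variables (R : realType) (V : finType) (e : rel V).
Hypothesis esym : symmetric e.
Hypothesis eirr : irreflexive e.
Hypothesis conn : connected_graph e.
Hypothesis hnb : forall u, e u (nb e u).
Local Notation gp := (gpoint R V).
Local Notation sp := (@same_point R V).
Local Notation upto := (@upto R V e).
Local Notation vpt := (@vpt R V e).
Local Notation Fx := (Fx conn).

Lemma dist_spg (x y y' : gp) : sp y y' -> dist e x y = dist e x y'.
Proof.
move=> h; rewrite /dist; congr inf; apply/seteqP; split=> r /= [w [hw <-]];
  exists w; split=> //; apply: wft_sp hw _ _; try by left.
  exact: h.
exact: sp_sym.
Qed.

Lemma chain_mem l (q : gp) s : chain_ok e q l -> s \in l ->
  step_valid e s /\ exists z, z \in q :: [seq step_end t | t <- l] /\ sp z (step_start s).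
Proof.
elim: l q => [|s0 l IH] q //= [hv [hq hc]].
rewrite inE; case/orP => [/eqP ->|hs].
  by split=> //; exists q; rewrite mem_head.
have [hv' [z [hz hsp]]] := IH _ hc hs; split=> //; exists z; split=> //.
by rewrite inE hz orbT.
Qed.

Lemma F_seg (p : gp) c d al be nu : is_point e p -> 0 <= al -> al <= nu -> nu <= be -> be <= 1 ->
  Num.min (Fx p (c, d, al)) (Fx p (c, d, be)) <= Num.max (Fx p (c, d, nu)) 1.
Proof.
move=> [_ hp] h0 h1 h2 h3; rewrite /Fx /=.
case: ifP => _; first by apply: seg_dir.
case: ifP => _.
  by apply: seg_dir => //; move: hp => /andP [? ?]; apply/andP; split; lra.
by rewrite le_max; apply/orP; left; apply: seg_base.
Qed.

Lemma stop_near (T : walk R V) (delta : R) (p : gp) : 1 <= delta -> is_tour e T ->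
  is_point e p -> (exists q, tour_point T q /\ dist e p q <= delta) ->
  exists z, z \in stops T /\ dist e p z <= delta.
Proof.
move=> hd [[hT1 hT2] _] hp [q [[hq|[s hs hcov]] hpq]].
  by exists (wstart T); split; [rewrite mem_head | rewrite -(dist_spg p hq)].
have [hv [z [hz hzs]]] := chain_mem hT2 hs.
move: s hs hv hzs hcov => [[[c d] al] be] hs hv hzs [nu [hnu hsp]].
simpl in hnu, hsp.
move: (hv) => [/= hcd [/andP [a0 a1] [/andP [b0 b1] _]]].
rewrite (dist_spg p hsp) in hpq.
have hnu' : 0 <= nu <= 1.
  move: hnu; case: (leP al be) => _ /andP [n1 n2]; apply/andP; split; lra.
have hy : is_point e ((c, d, nu) : gp) by split.
rewrite (dist_F esym eirr conn hp hy) in hpq.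
have key : Fx p (c, d, al) <= delta \/ Fx p (c, d, be) <= delta.
  have hm : Num.max (Fx p (c, d, nu)) 1 <= delta by rewrite ge_max hpq hd.
  move: hnu; case: (leP al be) => hab /andP [n1 n2].
    have := le_trans (F_seg c d hp a0 n1 n2 b1) hm.
    by rewrite ge_min => /orP.
  have := le_trans (F_seg c d hp b0 n1 n2 a1) hm.
  by rewrite ge_min => /orP [] h; [right|left].
case: key => hk.
  exists z; split=> //.
  rewrite (dist_spg p hzs) /step_start /= (dist_F esym eirr conn hp) //.
  by split => //=; rewrite a0 a1.
exists (c, d, be); split.
  by rewrite /stops inE; apply/orP; right; apply/mapP; exists (c, d, al, be).
by rewrite (dist_F esym eirr conn hp) //; split => //=; rewrite b0 b1.
Qed.

End Stops.

Lemma mem_nth_take (T : eqType) (x : T) (s : seq T) K y : y \in take K s ->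
  exists i, [/\ (i < K)%N, (i < size s)%N & y = nth x s i].
Proof.
move=> hy; exists (index y (take K s)).
have hi : (index y (take K s) < size (take K s))%N by rewrite index_mem.
have hK : (index y (take K s) < K)%N.
  by apply: leq_trans hi _; rewrite size_take; case: ifP => // /negbT; rewrite -leqNgt.
split=> //.
  by apply: leq_trans hi _; rewrite size_take; case: ifP => // /ltnW.
by rewrite -(nth_take x hK) nth_index.
Qed.

Lemma min_cases (R : realType) (a b : R) : Num.min a b = a \/ Num.min a b = b.
Proof. by case: (leP a b); [left|right]. Qed.

Section Region.
Variables (R : realType) (V : finType) (e : rel V).
Hypothesis esym : symmetric e.
Hypothesis eirr : irreflexive e.
Hypothesis conn : connected_graph e.
Hypothesis hnb : forall u, e u (nb e u).
Local Notation gp := (gpoint R V).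
Local Notation sp := (@same_point R V).
Local Notation upto := (@upto R V e).
Local Notation vpt := (@vpt R V e).
Local Notation Fx := (Fx conn).
Local Notation d := (dist e).
Variable delta : R.
Hypothesis hd12 : 12 <= delta.

Local Notation vp := (@vpt_point R V e hnb).

Lemma Fx_cases (x y : gp) : is_point e x -> is_point e y ->
  Fx x y = Num.min (hD conn x y.1.1 + y.2) (hD conn x y.1.2 + (1 - y.2)) \/ Fx x y <= 1.
Proof.
move=> [_ /andP [h0 h1]] [_ /andP [g0 g1]]; rewrite /Fx /=.
set b := Num.min (hD conn x y.1.1 + y.2) _.
case: ifP => _.
  case: (min_cases b `|x.2 - y.2|) => ->; [by left|right].
  by rewrite ler_norml; apply/andP; split; lra.
case: ifP => _; last by left.
case: (min_cases b `|1 - x.2 - y.2|) => ->; [by left|right].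
by rewrite ler_norml; apply/andP; split; lra.
Qed.

Lemma card_from_seq (A : {set V}) (s : seq V) : uniq s -> {subset s <= A} ->
  (size s)%:R <= (#|A|)%:R :> R.
Proof. by move=> hu hs; rewrite ler_nat cardE; apply: uniq_leq_size hu _ => x hx; rewrite mem_enum; apply: hs. Qed.

Definition Rg (p z : gp) : {set V} := [set w : V | d p (vpt w) + d (vpt w) z <= delta].

Lemma region_short (p z : gp) : is_point e p -> is_point e z -> d p z < delta / 2 ->
  (exists y, is_point e y /\ delta < d y z) -> delta / 12 <= (#|Rg p z|)%:R.
Proof.
move=> hp hz hl [y [hy hyz]].
have [w0 hw0] : exists w0, delta / 4 < d (vpt w0) z.
  case: (pselect (exists w0, delta / 4 < d (vpt w0) z)) => // hno; exfalso.
  have hall : forall w, d (vpt w) z <= delta / 4.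
    by move=> w; rewrite leNgt; apply/negP => h; apply: hno; exists w.
  have h1 : d y (vpt y.1.1) <= y.2 := dist_le (up_x1 hy).
  have h2 : d y z <= d y (vpt y.1.1) + d (vpt y.1.1) z :=
    dist_tri esym eirr conn hy (vp y.1.1) hz.
  have := hall y.1.1; move: hy => [_ /andP [y0 y1]].
  have hd : (12 : R) <= delta := hd12; lra.
have [s [hps hls hus hsz]] := Dpath_uniq conn z.1.1 w0.
set m := size s.
have hzw : d z (vpt w0) <= z.2 + m%:R.
  by apply: dist_le; have := up_path hps (up_x1 hz); rewrite hls.
rewrite (dist_sym esym eirr conn (vp w0) hz) in hw0.
move: (hz) => [_ /andP [z0 z1]].
set K := Num.truncn (delta / 4).
have hd : (12 : R) <= delta := hd12.
have /andP [K1 K2] : ((K%:R : R) <= delta / 4 < K.+1%:R) by apply: truncn_itv; lra.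
have hK : (K <= m.+1)%N.
  rewrite leqNgt; apply/negP => hK.
  have : (m.+2)%:R <= K%:R :> R by rewrite ler_nat.
  have e2 : (m.+2)%:R = m%:R + 2 :> R by rewrite -addn2 natrD.
  rewrite e2; lra.
set W := take K (z.1.1 :: s).
have hW : size W = K by rewrite /W size_takel.
have K3 : delta / 4 < K%:R + 1 by rewrite natr1.
apply: (@le_trans _ _ (size W)%:R); first by rewrite hW; lra.
apply: card_from_seq; first by apply: take_uniq.
move=> w /(mem_nth_take z.1.1) [i [hi1 hi2 ->]].
have hup := up_prefix hps (up_x1 hz) (i := i).
have hzi : d z (vpt (nth z.1.1 (z.1.1 :: s) i)) <= delta / 4.
  apply: le_trans (dist_le (hup _)) _; first by rewrite -ltnS.
  have : (i.+1 <= K)%N by [].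
  rewrite -(ler_nat R) -natr1 => hiK; lra.
rewrite inE.
have ht := dist_tri esym eirr conn hp hz (vp (nth z.1.1 (z.1.1 :: s) i)).
rewrite (dist_sym esym eirr conn (vp _) hz).
lra.
Qed.


Lemma mem_nth_ex (T : eqType) (x : T) (s : seq T) y : y \in s ->
  exists i, (i < size s)%N /\ y = nth x s i.
Proof. by move=> hy; exists (index y s); rewrite index_mem nth_index. Qed.

Lemma region_long (p z : gp) : is_point e p -> is_point e z -> d p z <= delta ->
  delta / 2 <= d p z -> delta / 12 <= (#|Rg p z|)%:R.
Proof.
move=> hp hz hle hge.
have hd : (12 : R) <= delta := hd12.
have hF := dist_F esym eirr conn hp hz.
move: (hp) (hz) => [_ /andP [p0 p1]] [_ /andP [z0 z1]].
case: (Fx_cases hp hz) => hF'; last by exfalso; rewrite hF in hge; lra.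
have [a [al [c' [be [hua [huz [hl [ha hb]]]]]]]] : exists a al c' be,
    upto p (vpt a) al /\ (forall q L, upto q (vpt c') L -> upto q z (L + be)) /\
    d p z = al + (D conn a c')%:R + be /\ (0 <= al <= 1) /\ (0 <= be <= 1).
  rewrite hF hF'.
  case: (min_cases (hD conn p z.1.1 + z.2) (hD conn p z.1.2 + (1 - z.2))) => ->;
    rewrite /hD.
    case: (min_cases (p.2 + (D conn p.1.1 z.1.1)%:R) ((1 - p.2) + (D conn p.1.2 z.1.1)%:R)) => ->.
      exists p.1.1, p.2, z.1.1, z.2; split; first exact: up_x1.
    split; first by move=> q L h; apply: up_pt0.
    split; first by [].
    by split; apply/andP; split; lra.
    exists p.1.2, (1 - p.2), z.1.1, z.2; split; first exact: up_x2.
    split; first by move=> q L h; apply: up_pt0.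
    split; first by [].
    by split; apply/andP; split; lra.
  case: (min_cases (p.2 + (D conn p.1.1 z.1.2)%:R) ((1 - p.2) + (D conn p.1.2 z.1.2)%:R)) => ->.
    exists p.1.1, p.2, z.1.2, (1 - z.2); split; first exact: up_x1.
    split; first by move=> q L h; apply: up_pt1.
    split; first by [].
    by split; apply/andP; split; lra.
  exists p.1.2, (1 - p.2), z.1.2, (1 - z.2); split; first exact: up_x2.
    split; first by move=> q L h; apply: up_pt1.
    split; first by [].
    by split; apply/andP; split; lra.
have [s [hps hls hus hsz]] := Dpath_uniq conn a c'.
have hDn : (size (a :: s))%:R = (D conn a c')%:R + 1 :> R by rewrite /= -natr1 hsz.
apply: (@le_trans _ _ (size (a :: s))%:R); first by rewrite hDn; lra.
apply: card_from_seq => // w /(mem_nth_ex a) [i [hi ->]].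
have hi' : (i <= size s)%N by rewrite -ltnS.
have h1 : d p (vpt (nth a (a :: s) i)) <= al + i%:R := dist_le (up_prefix hps hua hi').
have h2 : d (vpt (nth a (a :: s) i)) z <= (size s - i)%:R + be.
  by apply: dist_le; apply: huz; have := @up_suffix R V e hnb _ _ hps i hi'; rewrite hls.
rewrite natrB // hsz in h2.
by rewrite inE; lra.
Qed.


End Region.

Lemma min_cover (T : eqType) (cov : seq T -> Prop) Z : cov Z ->
  exists Z', [/\ {subset Z' <= Z}, cov Z' & forall z, z \in Z' -> ~ cov (filter (predC1 z) Z')].
Proof.
move: {2}(size Z) (leqnn (size Z)) => n; elim: n Z => [|n IH] Z hs hc.
  exists Z; split=> //.
  by move=> y hy; move: hs; rewrite leqn0 => /nilP hZ; move: hy; rewrite hZ.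
case: (pselect (exists z, z \in Z /\ cov (filter (predC1 z) Z))) => [[z [hz hcz]]|hno].
  have hlt : (size (filter (predC1 z) Z) <= n)%N.
    have h1 := count_predC (pred1 z) Z.
    have h2 : (0 < count (pred1 z) Z)%N by rewrite -has_count has_pred1.
    rewrite -ltnS; apply: leq_trans hs; rewrite size_filter.
    have -> : count (predC1 z) Z = count (predC (pred1 z)) Z by [].
    by rewrite -h1 -addn1 addnC leq_add2r.
  have [Z' [hs' hc' hm]] := IH _ hlt hcz.
  by exists Z'; split=> // y /hs'; rewrite mem_filter => /andP [].
exists Z; split=> //.
by move=> y hy hcy; apply: hno; exists y; split.
Qed.

Lemma stops_point (R : realType) (V : finType) (e : rel V) (T : walk R V) z :
  is_walk e T -> z \in stops T -> is_point e z.
Proof.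
move=> [h1 h2]; rewrite /stops inE; case/orP => [/eqP -> //|/mapP [s hs ->]].
by have [hv _] := chain_mem h2 hs; apply: valid_end.
Qed.

Lemma sum_lb (I : eqType) (L : seq I) (f : I -> nat) (R : realType) (c : R) :
  (forall i, i \in L -> c <= (f i)%:R) -> (size L)%:R * c <= (\sum_(i <- L) f i)%:R.
Proof.
elim: L => [|i L IH] h /=; first by rewrite big_nil mul0r.
rewrite big_cons natrD -natr1 mulrDl mul1r addrC lerD //.
  by apply: h; rewrite mem_head.
by apply: IH => j hj; apply: h; rewrite inE hj orbT.
Qed.

Theorem mainTheorem19 (R : realType) (V : finType) (e : rel V)
  (delta : R) (T : walk R V) :
  simple_graph e -> connected_graph e ->
  0 < delta ->
  ((12 * Num.ceil (#|V|%:R / delta) <= #|V|%:Z)%R) ->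
  shortest_delta_tour e delta T ->
  exists Z : seq (gpoint R V),
    {subset Z <= stops T} /\
    ((size Z)%:Z <= 12 * Num.ceil (#|V|%:R / delta))%R /\
    (forall p : gpoint R V, is_point e p ->
       exists2 z, z \in Z & dist e p z <= delta).
Proof.
move=> [esym eirr] conn dpos hk [[hT hcov] _].
have hkc : #|V|%:R / delta <= (Num.ceil (#|V|%:R / delta))%:~R := ceil_ge _.
move: hk hkc; set k := Num.ceil (#|V|%:R / delta) => hk hkc.
have hk0 : 0 <= k by rewrite /k ceil_ge0; apply: lt_le_trans (_ : -1 < 0) _;
  [rewrite oppr_lt0 ltr01 | apply: divr_ge0 => //; apply: ltW].
case: (pselect (exists p : gpoint R V, is_point e p)) => [[p0 hp0]|hno]; last first.
  exists [::]; split=> //; split; first by rewrite /= mulr_ge0.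
  by move=> p hp; exfalso; apply: hno; exists p.
have hnb : forall u, e u (nb e u).
  move=> u; rewrite /nb; case: pickP => [v hv|hn] //=; exfalso.
  have /connectP [s hs hl] := conn u p0.1.1.
  case: s hs hl => [|v s] /=.
    by move=> _ hu; move: hp0 => [he _]; move: (hn p0.1.2); rewrite -hu he.
  by case/andP => huv _ _; move: (hn v); rewrite huv.
have hn0 : (0 < #|V|)%N by apply/card_gt0P; exists p0.1.1.
have hnr : 0 < #|V|%:R :> R by rewrite ltr0n.
have hkp : 0 < k by rewrite /k ceil_gt0 divr_gt0.
have hkr : 0 < (k%:~R : R) by rewrite ltr0z.
have hnk : #|V|%:R <= k%:~R * delta by rewrite -ler_pdivrMr.
have hk' : (12 * k)%:~R <= (#|V|%:Z)%:~R :> R by rewrite ler_int.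
rewrite intrM in hk'.
have e12 : ((12 : int)%:~R : R) = 12 by [].
have en : ((#|V|%:Z)%:~R : R) = #|V|%:R by [].
rewrite e12 en in hk'.
have hd12 : (12 : R) <= delta by nra.
have hd1 : (1 : R) <= delta by lra.
pose cov (Z : seq (gpoint R V)) :=
  forall p, is_point e p -> exists z, z \in Z /\ dist e p z <= delta.
have hcovS : cov (stops T) by move=> p hp; apply: (stop_near esym eirr conn hd1 hT hp (hcov p hp)).
case: (pselect (exists z, z \in stops T /\ forall p, is_point e p -> dist e p z <= delta))
  => [[z [hz hall]]|hnu].
  exists [:: z]; split; first by move=> y; rewrite inE => /eqP ->.
  split; last by move=> p hp; exists z; [rewrite mem_head | apply: hall].
  rewrite /=; lia.
have hnu' : forall z, z \in stops T -> exists y, is_point e y /\ delta < dist e y z.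
  move=> z hz; case: (pselect (exists y, is_point e y /\ delta < dist e y z)) => // hno'.
  exfalso; apply: hnu; exists z; split=> // p hp; rewrite leNgt; apply/negP => h.
  by apply: hno'; exists p.
have [Z1 [hs1 hc1 hm1]] := min_cover hcovS.
set Z2 := undup Z1.
have hc2 : cov Z2.
  by move=> p hp; have [z [hz h]] := hc1 p hp; exists z; rewrite mem_undup.
have hpriv : forall z, exists p, z \in Z2 -> [/\ is_point e p, dist e p z <= delta &
    forall z', z' \in Z2 -> z' != z -> delta < dist e p z'].
  move=> z; case: (boolP (z \in Z2)) => hz; last by exists p0.
  have hz1 : z \in Z1 by rewrite -mem_undup.
  have hncov := hm1 z hz1.
  have [p [hp hfar]] : exists p, is_point e p /\
      forall z', z' \in filter (predC1 z) Z1 -> delta < dist e p z'.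
    case: (pselect (exists p, is_point e p /\
      forall z', z' \in filter (predC1 z) Z1 -> delta < dist e p z')) => // hno'.
    exfalso; apply: hncov => p hp.
    case: (pselect (exists z', z' \in filter (predC1 z) Z1 /\ dist e p z' <= delta)) => // hno''.
    exfalso; apply: hno'; exists p; split=> // z' hz'; rewrite ltNge; apply/negP => h.
    by apply: hno''; exists z'.
  exists p => _; split=> //.
    have [y [hy hdy]] := hc1 p hp.
    case: (eqVneq y z) => [<- //|hyz].
    by have := hfar y; rewrite mem_filter /= hyz hy => /(_ isT); rewrite ltNge hdy.
  by move=> z' hz' hne; apply: hfar; rewrite mem_filter /= hne -mem_undup.
have [pz hpz] := choice hpriv.
pose A z := Rg e delta (pz z) z.
have hzp : forall z, z \in Z2 -> is_point e z.
  by move=> z hz; apply: (stops_point hT.1); apply: hs1; rewrite -mem_undup.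
have hA : forall z, z \in Z2 -> delta / 12 <= (#|A z|)%:R.
  move=> z hz; have [hp hpd _] := hpz z hz.
  case: (leP (delta / 2) (dist e (pz z) z)) => h.
    exact: (region_long esym eirr conn hnb hd12 hp (hzp z hz)).
  apply: (region_short esym eirr conn hnb hd12 hp (hzp z hz) h).
  by apply: hnu'; apply: hs1; rewrite -mem_undup.
have hdisj : forall i j w, i \in Z2 -> j \in Z2 -> i != j -> w \in A i -> w \in A j -> False.
  move=> i j w hi hj hij; rewrite !inE => hwi hwj.
  have [hpi _ hfi] := hpz i hi; have [hpj _ hfj] := hpz j hj.
  have hji : j != i by rewrite eq_sym.
  have h1 := hfi j hj hji.
  have h2 := hfj i hi hij.
  have hw := @vpt_point R V e hnb w.
  have t1 := dist_tri esym eirr conn hpi hw (hzp j hj).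
  have t2 := dist_tri esym eirr conn hpj hw (hzp i hi).
  lra.
have hsum := sum_card_disj (A := A) (undup_uniq Z1) hdisj.
have hlb := sum_lb (L := Z2) (f := fun z => #|A z|) hA.
have hsz : (size Z2)%:R * (delta / 12) <= #|V|%:R.
  by apply: le_trans hlb _; rewrite ler_nat.
exists Z2; split.
  by move=> z hz; apply: hs1; rewrite -mem_undup.
split.
  rewrite -(ler_int R) intrM e12.
  have es : (((size Z2)%:Z)%:~R : R) = (size Z2)%:R by [].
  rewrite es; nra.
by move=> p hp; have [z [hz h]] := hc2 p hp; exists z.
Qed.
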